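(* For all integers $n,m\ge0$, $$\sum_{k=0}^n\binom{n}{k}(-1)^kH_k(m)=(-1)^n\frac{m!}{n!}s(n,m)\qquad\text{and}\qquad \sum_{k=m}^n\binom{n}{k}\frac{s(k,m)}{k!}=\frac{1}{m!}H_n(m).$$
   Context: For integers $m\ge 1$, $n\ge 0$, the multiple harmonic-like numbers are $H_n(m)=\sum_{1\le k_1+k_2+\cdots+k_m\le n}\frac{1}{k_1k_2\cdots k_m}$ (sum over positive integers $k_1,\dots,k_m$), with $H_n(0)=1$ for $n\ge 0$ and $H_0(m)=0$ for $m\ge1$. Equivalently, $\sum_{n\ge0}H_n(m)z^n=\frac{(-\ln(1-z))^m}{1-z}$. The (signed) Stirling numbers of the first kind $s(n,k)$ are defined by $\sum_{n\ge k}s(n,k)\frac{z^n}{n!}=\frac{\ln^k(1+z)}{k!}$, with $s(n,k)=0$ for $n<k$. *)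

(* Defs.v *)
From mathcomp Require Import all_boot all_order all_algebra.
Set Implicit Arguments. Unset Strict Implicit. Unset Printing Implicit Defensive.
Import Order.TTheory GRing.Theory Num.Theory.
Local Open Scope ring_scope.

(* Tuples (k_1,...,k_m) of positive integers, each k_i <= n (automatic when
   the sum is <= n), encoded as finite functions 'I_m -> 'I_n.+1. *)
Definition pos_tuple (m n : nat) (k : {ffun 'I_m -> 'I_n.+1}) : bool :=
  [forall i, 0 < (k i : nat)]%N.

Definition tsum (m n : nat) (k : {ffun 'I_m -> 'I_n.+1}) : nat :=
  (\sum_(i < m) (k i : nat))%N.

Definition Hmult (n m : nat) : rat :=
  if m is 0 then 1 else
  \sum_(k : {ffun 'I_m -> 'I_n.+1} | pos_tuple k && (1 <= tsum k <= n)%N)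
     \prod_(i < m) ((k i : nat)%:R)^-1.

(* Signed Stirling numbers of the first kind, via the generating function
   sum_n s(n,k) z^n/n! = ln^k(1+z)/k!, ln(1+z) = sum_{j>=1} (-1)^(j-1) z^j/j:
   s(n,k) = n!/k! * [z^n] ln(1+z)^k, the coefficient written as the sum over
   compositions (j_1,...,j_k) of n into k positive parts. *)
Definition stirling1 (n k : nat) : rat :=
  (n`!)%:R / (k`!)%:R *
  \sum_(j : {ffun 'I_k -> 'I_n.+1} | pos_tuple j && (tsum j == n))
     \prod_(i < k) ((-1) ^+ (j i : nat).-1 / (j i : nat)%:R).

(* Main.v *)
Require Import Defs.
From mathcomp Require Import all_boot all_order all_algebra zify ring.
Set Implicit Arguments. Unset Strict Implicit. Unset Printing Implicit Defensive.
Import Order.TTheory GRing.Theory Num.Theory.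
Local Open Scope ring_scope.

Definition F (w : nat -> rat) (B m N : nat) : rat :=
  \sum_(k : {ffun 'I_m -> 'I_B.+1} | pos_tuple k && (tsum k == N))
     \prod_(i < m) w (k i).

Lemma F0 w B N : F w B 0 N = (N == 0)%:R.
Proof.
rewrite /F.
have Ht : forall k : {ffun 'I_0 -> 'I_B.+1}, tsum k = 0%N.
  by move=> k; rewrite /tsum big_ord0.
have Hp : forall k : {ffun 'I_0 -> 'I_B.+1}, pos_tuple k.
  by move=> k; apply/forallP => -[].
case: N => [|N].
  rewrite (eq_bigl xpredT); last by move=> k; rewrite Hp Ht.
  under eq_bigr do rewrite big_ord0.
  by rewrite sumr_const card_ffun card_ord card_ord.
  
by rewrite big_pred0 //= => k; rewrite Ht andbF.
Qed.

Section Split.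
Variables (B m : nat).
Local Notation T := 'I_B.+1.
Definition cons_ff (x : T) (h : {ffun 'I_m -> T}) : {ffun 'I_m.+1 -> T} :=
  [ffun i => if unlift ord0 i is Some j then h j else x].
Definition split_ff (k : {ffun 'I_m.+1 -> T}) : T * {ffun 'I_m -> T} :=
  (k ord0, [ffun j => k (lift ord0 j)]).

Lemma cons_ff0 x h : cons_ff x h ord0 = x.
Proof. by rewrite ffunE unlift_none. Qed.
Lemma cons_ffS x h j : cons_ff x h (lift ord0 j) = h j.
Proof. by rewrite ffunE liftK. Qed.

Lemma cons_bij : bijective (fun p : T * {ffun 'I_m -> T} => cons_ff p.1 p.2).
Proof.
exists split_ff.
  move=> [x h] /=; rewrite /split_ff cons_ff0; congr pair.
  by apply/ffunP => j; rewrite ffunE cons_ffS.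
move=> k; apply/ffunP => i; rewrite ffunE.
by case: unliftP => [j ->|->] /=; rewrite ?ffunE.
Qed.

Lemma tsum_cons x h : tsum (cons_ff x h) = (x + tsum h)%N.
Proof.
rewrite /tsum big_ord_recl cons_ff0; congr addn.
by apply: eq_bigr => j _; rewrite cons_ffS.
Qed.

Lemma pos_cons x h : pos_tuple (cons_ff x h) = (0 < (x : nat))%N && pos_tuple h.
Proof.
apply/forallP/andP.
  move=> H; split; first by have := H ord0; rewrite cons_ff0.
  by apply/forallP => j; have := H (lift ord0 j); rewrite cons_ffS.
move=> [H0 /forallP H] i; case: (unliftP ord0 i) => [j ->|->].
  by rewrite cons_ffS.
by rewrite cons_ff0.
Qed.
End Split.

Lemma FS w B m N : F w B m.+1 N =
  \sum_(x < B.+1 | (0 < (x : nat))%N && (x <= N)%N) w x * F w B m (N - x).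
Proof.
rewrite /F (reindex _ (onW_bij _ (@cons_bij B m))) /=.
rewrite (eq_bigl (fun p : 'I_B.+1 * {ffun 'I_m -> 'I_B.+1} => ((0 < (p.1 : nat))%N && (p.1 <= N)%N) &&
     (pos_tuple p.2 && (tsum p.2 == N - p.1)%N))); last first.
  move=> [x h] /=; rewrite pos_cons tsum_cons.
  case: (0 < (x:nat))%N; case: (pos_tuple h); rewrite /= ?andbF //.
  apply/eqP/andP => [<-|[H /eqP ->]]; first by split; [lia | apply/eqP; lia].
  lia.
symmetry; transitivity (\sum_(x < B.+1 | (0 < (x : nat))%N && (x <= N)%N)
  \sum_(h : {ffun 'I_m -> 'I_B.+1} | pos_tuple h && (tsum h == N - x)%N)
     \prod_(i < m.+1) w (cons_ff x h i)); last by rewrite pair_big_dep.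
apply: eq_bigr => x _; rewrite big_distrr /=.
apply: eq_bigr => h _; rewrite big_ord_recl cons_ff0; congr (_ * _); apply: eq_bigr => i _; by rewrite cons_ffS.
Qed.

Fixpoint cw (w : nat -> rat) (m N : nat) : rat :=
  match m with
  | 0 => (N == 0)%:R
  | m'.+1 => \sum_(i < N) w (N - i)%N * cw w m' i
  end.

Lemma Fc w B m N : (N <= B)%N -> F w B m N = cw w m N.
Proof.
elim: m N => [|m IH] N HN; first by rewrite F0.
rewrite FS /=.
rewrite [RHS](reindex_inj rev_ord_inj) /=.
transitivity (\sum_(i < N) w i.+1 * cw w m (N - i.+1)); last first.
  by apply: eq_bigr => i _ /=; rewrite subKn.
transitivity (\sum_(x < N.+1 | (0 < (x : nat))%N) w x * cw w m (N - x)).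
  rewrite [RHS](big_ord_widen_cond B.+1 (fun x : nat => (0 < x)%N) (fun x : nat => w x * cw w m (N - x)) (_ : N.+1 <= B.+1)%N) //.
  apply: eq_big => x; first by rewrite ltnS.
  by move/andP=> [_ Hx]; rewrite IH //; lia.
rewrite big_mkcond big_ord_recl /=; rewrite add0r.
by apply: eq_bigr.
Qed.

Definition l (j : nat) : rat := (j%:R)^-1.
Definition L (j : nat) : rat := (-1) ^+ j.-1 / j%:R.
Definition c := cw l.
Definition S m n := \sum_(N < n.+1) c m N.

Lemma c0 m : c m 0 = (m == 0)%:R.
Proof. by case: m => [|m] //=; rewrite /c /= big_ord0. Qed.

Lemma c_lt m k : (k < m)%N -> c m k = 0.
Proof.
elim: m k => [|m IH] k //= Hk.
rewrite /c /=; apply: big1 => i _; rewrite -/c IH ?mulr0 //.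
by have := ltn_ord i; lia.
Qed.

Lemma Hmult_S n m : Hmult n m = S m n.
Proof.
case: m => [|m].
  rewrite /S /c /= big_ord_recl /= big1 ?addr0 // => i _.
rewrite /Hmult.
rewrite (partition_big (fun k : {ffun 'I_m.+1 -> 'I_n.+1} => (inord (tsum k) : 'I_n.+1))
   (fun j : 'I_n.+1 => (0 < (j : nat))%N)); last first.
  move=> k /andP [_ /andP [H1 H2]]; by rewrite inordK // ltnS.
rewrite /S big_ord_recl c0 /= add0r.
rewrite [RHS](eq_bigr (fun j : 'I_n => F l n m.+1 (lift ord0 j))); last first.
  move=> j _; rewrite Fc // lift0; exact: ltn_ord.
rewrite big_mkcond big_ord_recl /= add0r; apply: eq_bigr => j _ /=.
rewrite /F; apply: eq_bigl => k.
have Hj := ltn_ord j.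
case: (pos_tuple k) => //=.
case: (leqP (tsum k) n) => Ht.
  rewrite andbT -(inj_eq val_inj) /= inordK; last by lia.
  apply/andP/idP => [[_ ->]//|/eqP ->]; split => //; rewrite /bump /=; lia.
rewrite andbF; apply/esym/eqP => E; rewrite E /bump /= in Ht; lia.
Qed.

Lemma stirling_c n m : stirling1 n m = (n`!)%:R / (m`!)%:R * cw L m n.
Proof. by rewrite /stirling1 -(@Fc L n m n (leqnn n)). Qed.

Lemma sign_sq n : ((-1) ^+ n * (-1) ^+ n : rat) = 1.
Proof. by rewrite -expr2 sqrr_sign. Qed.

Lemma cL m N : cw L m N = (-1) ^+ (N + m) * c m N.
Proof.
elim: m N => [|m IH] N /=.
  by case: N => [|N] /=; rewrite ?mulr1 ?mulr0.
rewrite /c /= mulr_sumr; apply: eq_bigr => i _.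
rewrite IH /L /l.
have Hi := ltn_ord i.
have E : (N + m.+1 = (N - i).-1 + (i + m) + 2)%N by lia.
rewrite E !exprD (_ : (-1) ^+ 2 = (1 : rat)); last by rewrite expr2 mulrN1 opprK.
rewrite -/c; ring.
Qed.

Definition B (a : nat -> rat) n := \sum_(k < n.+1) ('C(n, k))%:R * (-1) ^+ k * a k.

Lemma B_lin a b n : B (fun k => a k + b k) n = B a n + B b n.
Proof. by rewrite /B -big_split; apply: eq_bigr => k _; rewrite mulrDr. Qed.

Lemma G1 a n : B a n.+1 = a 0%N - \sum_(k < n.+1) ('C(n.+1, k.+1))%:R * (-1) ^+ k * a k.+1.
Proof.
rewrite /B big_ord_recl /= bin0 expr0 !mul1r; congr (_ + _).
rewrite -sumrN; apply: eq_bigr => k _; rewrite exprS; ring.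
Qed.

Lemma B_pascal a n : B a n.+1 = B a n - B (fun k => a k.+1) n.
Proof.
rewrite G1 /B [in RHS]big_ord_recl /= bin0 expr0 !mul1r -addrA; congr (_ + _).
rewrite [X in X - _](_ : _ = \sum_(k < n.+1) ('C(n, k.+1))%:R * (-1) ^+ k.+1 * a k.+1); last first.
  rewrite big_ord_recr /= bin_small // mul0r mul0r addr0.
  by apply: eq_bigr => k _; rewrite /bump /= add1n.
rewrite -sumrB -sumrN; apply: eq_bigr => k _.
rewrite binS natrD exprS; ring.
Qed.

Lemma G2 (b : nat -> rat) n : \sum_(k < n.+1) ('C(n, k))%:R * (-1) ^+ k * (((k.+1)%:R)^-1 * b k)
  = ((n.+1)%:R)^-1 * \sum_(k < n.+1) ('C(n.+1, k.+1))%:R * (-1) ^+ k * b k.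
Proof.
rewrite mulr_sumr; apply: eq_bigr => k _.
have H := mul_bin_diag n.+1 k.
have H' : (('C(n, k))%:R : rat) = (k.+1)%:R * ('C(n.+1, k.+1))%:R / (n.+1)%:R.
  apply: (mulIf (_ : (n.+1)%:R != 0 :> rat)); first by rewrite pnatr_eq0.
  rewrite mulfVK ?pnatr_eq0 // -!natrM mulnC; by rewrite -H.
rewrite H'; field.
by rewrite !nat1r !pnatr_eq0.
Qed.

Lemma Conv (f g : nat -> rat) N :
  \sum_(i < N) f (N - i)%N * \sum_(t < i.+1) g t
  = \sum_(u < N.+1) \sum_(t < u) f (u - t)%N * g t.
Proof.
elim: N f => [|N IH] f.
  by rewrite big_ord0 big_ord_recl !big_ord0 addr0.
rewrite [RHS]big_ord_recl /= big_ord0 add0r.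
have E : forall u : 'I_N.+1, \sum_(t < lift ord0 u) f (lift ord0 u - t)%N * g t
   = \sum_(t < u) f (u - t).+1 * g t + f 1%N * g u.
  move=> u; rewrite lift0 big_ord_recr /= subSnn; congr (_ + _).
  by apply: eq_bigr => t _ /=; rewrite subSn // ltnW.
rewrite (eq_bigr _ (fun u _ => E u)) big_split /= -(IH (fun j => f j.+1)) -mulr_sumr.
rewrite big_ord_recr /= subSnn; congr (_ + _).
by apply: eq_bigr => i _ /=; rewrite subSn // ltnW.
Qed.

Lemma D_aux m n : (n.+1)%:R * c m.+1 n.+1
  = S m n + \sum_(i < n.+1) l (n.+1 - i)%N * (i%:R * c m i).
Proof.
rewrite /S /c /= -/c mulr_sumr -big_split; apply: eq_bigr => i _.
have Hi := ltn_ord i.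
have E : ((n.+1)%:R : rat) = (n.+1 - i)%:R + i%:R by rewrite -natrD subnK // ltnW.
rewrite E /l /=; field.
by rewrite pnatr_eq0; lia.
Qed.

Lemma D m n : (n.+1)%:R * c m.+1 n.+1 = (m.+1)%:R * S m n.
Proof.
elim: m n => [|m IH] n.
  rewrite D_aux big1 ?addr0 ?mul1r // => i _.
  by case: (nat_of_ord i) => [|j]; rewrite /c /= ?mul0r ?mulr0.
rewrite D_aux big_ord_recl /= mul0r mulr0 add0r.
rewrite (eq_bigr (fun i : 'I_n => (m.+1)%:R * (l (n - i)%N * S m i))); last first.
  move=> i _; rewrite /bump /= add1n subSS IH; ring.
rewrite -mulr_sumr /S Conv -/(S m.+1 n).
rewrite -[in RHS](add1n m.+1) natrD; ring.
Qed.

Lemma c_succ m k : c m.+1 k.+1 = ((k.+1)%:R)^-1 * ((m.+1)%:R * S m k).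
Proof. by rewrite -D mulKf // pnatr_eq0. Qed.

Lemma S_succ m k : S m k.+1 = S m k + c m k.+1.
Proof. by rewrite /S big_ord_recr. Qed.

Lemma S0 m : S m 0 = c m 0.
Proof. by rewrite /S big_ord_recl big_ord0 addr0. Qed.

Lemma B0 a : B a 0 = a 0%N.
Proof. by rewrite /B big_ord_recl big_ord0 addr0 bin0 expr0 !mul1r. Qed.

Lemma c0sign m : (-1) ^+ m * c m 0 = c m 0.
Proof. by rewrite c0; case: m => [|m] /=; rewrite ?expr0 ?mul1r ?mulr0. Qed.

Lemma B_ext (a b : nat -> rat) n : (forall k, a k = b k) -> B a n = B b n.
Proof. by move=> H; rewrite /B; apply: eq_bigr => k _; rewrite H. Qed.

Lemma main m : (forall n, B (c m) n = (-1) ^+ m * S m n) /\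
               (forall n, B (S m) n = (-1) ^+ m * c m n).
Proof.
elim: m => [|m [IH1 IH2]].
- have Q : forall n, B (fun k => c 0 k.+1) n = 0.
    by move=> n; rewrite /B big1 // => k _; rewrite /c /= mulr0.
  split => n; elim: n => [|n IHn].
  + by rewrite B0 S0 expr0 mul1r.
  + by rewrite B_pascal Q subr0 IHn S_succ /c /= addr0.
  + by rewrite B0 S0 expr0 mul1r.
  + rewrite B_pascal (B_ext n (fun k => S_succ 0 k)) B_lin Q addr0 subrr.
    by rewrite /c /= mulr0.
- have P : forall n, \sum_(k < n.+1) ('C(n.+1, k.+1))%:R * (-1) ^+ k * S m k
      = (-1) ^+ m * S m n.
    move=> n.
    have E1 := G1 (S m) n; have E2 := G1 (c m) n.
    rewrite IH2 in E1; rewrite IH1 in E2.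
    have E3 : \sum_(k < n.+1) ('C(n.+1, k.+1))%:R * (-1) ^+ k * S m k.+1
      = \sum_(k < n.+1) ('C(n.+1, k.+1))%:R * (-1) ^+ k * S m k
      + \sum_(k < n.+1) ('C(n.+1, k.+1))%:R * (-1) ^+ k * c m k.+1.
      by rewrite -big_split; apply: eq_bigr => k _; rewrite S_succ mulrDr.
    rewrite E3 S0 in E1; rewrite S_succ in E2.
    have HZ : forall Z Y s1 s2 c0 : rat, s1 = c0 - (Z + Y) -> s2 = c0 - Y -> Z = s2 - s1.
      by move=> Z Y s1 s2 c0 -> ->; ring.
    rewrite (HZ _ _ _ _ _ E1 E2); ring.
  have Q : forall n, B (fun k => c m.+1 k.+1) n = - ((-1) ^+ m.+1 * c m.+1 n.+1).
    move=> n; rewrite (B_ext n (fun k => c_succ m k)) /B.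
    rewrite (G2 (fun k => (m.+1)%:R * S m k)).
    rewrite (eq_bigr (fun k : 'I_n.+1 => (m.+1)%:R * (('C(n.+1, k.+1))%:R * (-1) ^+ k * S m k))); last first.
      by move=> k _; ring.
    rewrite -mulr_sumr P c_succ exprS; ring.
  split => n; elim: n => [|n IHn].
  + by rewrite B0 S0 c0sign.
  + by rewrite B_pascal Q IHn S_succ; ring.
  + by rewrite B0 S0 c0sign.
  + rewrite B_pascal (B_ext n (fun k => S_succ m.+1 k)) B_lin Q; ring.
Qed.

Lemma ext_range (G : nat -> rat) m n : (forall k, (k < m)%N -> G k = 0) ->
  \sum_(m <= k < n.+1) G k = \sum_(0 <= k < n.+1) G k.
Proof.
move=> HG; case: (leqP m n.+1) => Hm.
  rewrite [RHS](@big_cat_nat _ _ _ m) //=.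
  have -> : \sum_(0 <= k < m) G k = 0 by rewrite big_mkord big1 // => k _; apply: HG.
  by rewrite add0r.
rewrite big_geq ?(ltnW Hm) // big_mkord big1 // => k _; apply: HG.
by have := ltn_ord k; lia.
Qed.

Theorem corollary2 (n m : nat) :
  \sum_(0 <= k < n.+1) ('C(n, k))%:R * (-1) ^+ k * Hmult k m
    = (-1) ^+ n * ((m`!)%:R / (n`!)%:R) * stirling1 n m
  /\
  \sum_(m <= k < n.+1) ('C(n, k))%:R * (stirling1 k m / (k`!)%:R)
    = ((m`!)%:R)^-1 * Hmult n m.
Proof.
have [M1 M2] := main m.
have Fn : forall k, ((k`!)%:R : rat) != 0 by move=> k; rewrite pnatr_eq0 -lt0n fact_gt0.
split.
  rewrite big_mkord (eq_bigr (fun k : 'I_n.+1 => ('C(n, k))%:R * (-1) ^+ k * S m k)); last first.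
    by move=> k _; rewrite Hmult_S.
  rewrite -/(B (S m) n) M2 stirling_c cL exprD.
  have Hs := sign_sq n.
  have -> : (-1) ^+ n * ((m`!)%:R / (n`!)%:R) * ((n`!)%:R / (m`!)%:R * ((-1) ^+ n * (-1) ^+ m * c m n))
     = ((-1) ^+ n * (-1) ^+ n) * ((-1) ^+ m * c m n) * (((m`!)%:R / (n`!)%:R) * ((n`!)%:R / (m`!)%:R)) by ring.
  have -> : ((m`!)%:R / (n`!)%:R) * ((n`!)%:R / (m`!)%:R) = 1 :> rat.
    by field; rewrite ?Fn.
  by rewrite Hs mul1r mulr1.
rewrite ext_range; last first.
  by move=> k Hk; rewrite stirling_c cL c_lt // !mulr0 mul0r mulr0.
rewrite big_mkord Hmult_S.
have -> : S m n = (-1) ^+ m * B (c m) n by rewrite M1 mulrA sign_sq mul1r.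
rewrite /B !mulr_sumr.
apply: eq_bigr => k _; rewrite stirling_c cL exprD.
by field; rewrite ?Fn.
Qed.
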